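(* $\chi(\operatorname{KG}(F_7))=3$, and $\chi(\operatorname{KG}(N))=5$ where $N$ is the non-Pappus matroid.
   Context: The matroid Kneser graph $\operatorname{KG}(M)$ has the bases of $M$ as vertices, two bases being adjacent when they are disjoint; $\chi$ is chromatic number. $F_7$ is the Fano matroid: rank $3$ on the $7$ points of the Fano plane, bases being the $3$-subsets that are not lines. The non-Pappus matroid $N$ is the rank-$3$ matroid on $\{1,\dots,9\}$ whose bases are the $3$-subsets other than the eight collinear triples $\{1,2,9\},\{4,6,7\},\{1,7,8\},\{1,4,5\},\{2,5,6\},\{6,8,9\},\{3,4,9\},\{2,3,7\}$ (the Pappus configuration with the line $\{3,5,8\}$ removed). *)

(* Defs.v *)
From mathcomp Require Import all_boot.
Set Implicit Arguments. Unset Strict Implicit. Unset Printing Implicit Defensive.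

(* Matroid Kneser graph KG(M): vertices = bases of M, edges = disjoint pairs.
   A matroid is given here by its set of bases on a finite ground set T. *)
Section Kneser.
Variable T : finType.
Variable bases : {set {set T}}.

Definition KG_proper_coloring (k : nat) (c : {set T} -> 'I_k) : Prop :=
  forall A B, A \in bases -> B \in bases -> [disjoint A & B] -> c A != c B.

Definition KG_colorable (k : nat) : Prop := exists c : {set T} -> 'I_k, KG_proper_coloring c.

Definition KG_chromatic_number_is (k : nat) : Prop :=
  KG_colorable k /\ forall j, KG_colorable j -> k <= j.
End Kneser.

(* Points are labelled 1..n and represented by 'I_n (label i ~ ordinal i-1). *)
Definition pt7 (i : nat) : 'I_7 := inord i.-1.
Definition pt9 (i : nat) : 'I_9 := inord i.-1.

Definition fano_lines : {set {set 'I_7}} :=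
  [set [set pt7 1; pt7 2; pt7 3]; [set pt7 1; pt7 4; pt7 5]; [set pt7 1; pt7 6; pt7 7];
       [set pt7 2; pt7 4; pt7 6]; [set pt7 2; pt7 5; pt7 7]; [set pt7 3; pt7 4; pt7 7];
       [set pt7 3; pt7 5; pt7 6]].

Definition fano_bases : {set {set 'I_7}} :=
  [set A : {set 'I_7} | (#|A| == 3) && (A \notin fano_lines)].

Definition nonpappus_lines : {set {set 'I_9}} :=
  [set [set pt9 1; pt9 2; pt9 9]; [set pt9 4; pt9 6; pt9 7]; [set pt9 1; pt9 7; pt9 8];
       [set pt9 1; pt9 4; pt9 5]; [set pt9 2; pt9 5; pt9 6]; [set pt9 6; pt9 8; pt9 9];
       [set pt9 3; pt9 4; pt9 9]; [set pt9 2; pt9 3; pt9 7]].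

Definition nonpappus_bases : {set {set 'I_9}} :=
  [set A : {set 'I_9} | (#|A| == 3) && (A \notin nonpappus_lines)].

(* Main.v *)
Require Import Defs.
From mathcomp Require Import all_boot.
From mathcomp Require Import zify.
Set Implicit Arguments. Unset Strict Implicit. Unset Printing Implicit Defensive.

Section Search.
Variable tab : seq (seq bool).
Variable K : nat.
Definition tadj u w := nth false (nth [::] tab u) w.

Definition cons_ok (r : seq bool) c (pre : seq nat) :=
  all (fun bp => ~~ bp.1 || (bp.2 != c)) (zip r pre).

Fixpoint ext n v pre : bool :=
  if n is n'.+1 then
    let r := nth [::] tab v in
    has (fun c => if cons_ok r c pre then ext n' v.+1 (rcons pre c) else false) (iota 0 K)
  else true.

Lemma cons_ok_lem (f : nat -> nat) r s c :
  (forall k, k < size s -> nth false r k -> f (nth 0 s k) != c) ->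
  cons_ok r c (map f s).
Proof.
elim: s r => [|x s IH] [|b r] //= H.
rewrite /cons_ok /=; apply/andP; split.
  by case: b H => //= H; apply: (H 0).
by apply: IH => k ks; apply: (H k.+1).
Qed.

Lemma ext_complete (f : nat -> nat) n v :
  (forall u, f u < K) ->
  (forall u w, u < v + n -> w < u -> tadj u w -> f u != f w) ->
  ext n v (map f (iota 0 v)).
Proof.
move=> fK; elim: n v => [//|n IH] v fP /=.
apply/hasP; exists (f v); first by rewrite mem_iota add0n fK.
have -> : cons_ok (nth [::] tab v) (f v) (map f (iota 0 v)).
  apply: cons_ok_lem => k; rewrite size_iota => kv.
  rewrite nth_iota // add0n => a; rewrite eq_sym; apply: fP => //; lia.
have -> : rcons (map f (iota 0 v)) (f v) = map f (iota 0 v.+1).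
  by rewrite -addn1 iotaD map_cat cats1.
apply: IH => u w uv wu; apply: fP => //; lia.
Qed.
End Search.
Definition F_vs : seq (seq nat) := [:: [:: 1; 2; 4];
  [:: 5; 6; 7];
  [:: 1; 3; 4];
  [:: 2; 6; 7];
  [:: 3; 4; 5];
  [:: 1; 2; 6];
  [:: 3; 5; 7]].
Definition F_tab : seq (seq bool) := [:: [:: ];
  [:: true];
  [:: false; true];
  [:: false; false; true];
  [:: false; false; false; true];
  [:: false; false; false; false; true];
  [:: true; false; false; false; false; true]].

Definition N_vs : seq (seq nat) := [:: [:: 1; 4; 8];
  [:: 2; 5; 7];
  [:: 3; 6; 9];
  [:: 1; 4; 6];
  [:: 2; 7; 8];
  [:: 3; 5; 9];
  [:: 1; 6; 9];
  [:: 5; 7; 8];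
  [:: 1; 3; 6];
  [:: 2; 4; 8];
  [:: 3; 5; 7];
  [:: 4; 6; 9];
  [:: 2; 3; 5];
  [:: 1; 4; 9];
  [:: 3; 5; 8];
  [:: 2; 4; 7];
  [:: 3; 5; 6];
  [:: 1; 4; 7];
  [:: 2; 8; 9];
  [:: 1; 6; 7];
  [:: 2; 4; 9];
  [:: 2; 3; 8];
  [:: 5; 6; 9];
  [:: 1; 5; 7];
  [:: 3; 7; 8];
  [:: 2; 5; 9];
  [:: 3; 6; 8];
  [:: 4; 5; 9];
  [:: 1; 3; 7];
  [:: 4; 6; 8];
  [:: 2; 3; 9];
  [:: 5; 8; 9];
  [:: 1; 2; 6];
  [:: 4; 5; 8];
  [:: 2; 6; 7];
  [:: 1; 3; 4];
  [:: 6; 7; 9];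
  [:: 1; 2; 3];
  [:: 3; 4; 6];
  [:: 7; 8; 9];
  [:: 3; 4; 5];
  [:: 1; 8; 9];
  [:: 3; 4; 7]].
Definition N_tab : seq (seq bool) := [:: [:: ];
  [:: true];
  [:: true; true];
  [:: false; true; false];
  [:: false; false; true; true];
  [:: true; false; false; true; true];
  [:: false; true; false; false; true; false];
  [:: false; false; true; true; false; false; true];
  [:: false; true; false; false; true; false; false; true];
  [:: false; false; true; false; false; true; true; false; true];
  [:: true; false; false; true; false; false; true; false; false; true];
  [:: false; true; false; false; true; false; false; true; false; false; true];
  [:: true; false; false; true; false; false; true; false; false; false; false; true];
  [:: false; true; false; false; true; false; false; true; false; false; true; false; true];
  [:: false; false; false; true; false; false; true; false; false; false; false; true; false; true];
  [:: false; false; true; false; false; true; true; false; true; false; false; false; false; false; true];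
  [:: true; false; false; false; true; false; false; false; false; true; false; false; false; true; false; true];
  [:: false; false; true; false; false; true; false; false; false; false; false; false; true; false; true; false; true];
  [:: false; false; false; true; false; false; false; false; true; false; true; false; false; false; false; false; true; true];
  [:: false; false; false; false; false; true; false; false; false; true; false; false; true; false; true; false; false; false; true];
  [:: false; false; false; false; false; false; false; true; true; false; true; false; false; false; true; false; true; false; false; true];
  [:: false; false; false; true; false; false; true; false; false; false; false; true; false; true; false; false; false; true; false; true; false];
  [:: true; false; false; false; true; false; false; false; false; true; false; false; false; false; false; true; false; true; false; false; false; true];
  [:: false; false; true; false; false; false; false; false; false; true; false; true; false; false; false; false; false; false; true; false; true; true; false];
  [:: false; false; false; true; false; false; true; false; false; false; false; true; false; true; false; false; false; false; false; false; true; false; true; false];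
  [:: true; false; false; true; false; false; false; false; true; false; false; false; false; false; false; false; false; true; false; true; false; false; false; false; true];
  [:: false; true; false; false; false; false; false; false; false; false; false; false; false; true; false; true; false; true; false; false; true; false; false; true; false; true];
  [:: false; false; false; false; true; false; false; false; true; false; false; false; false; false; false; false; false; false; false; true; false; true; false; false; true; false; true];
  [:: false; false; false; false; false; false; false; false; false; true; false; true; false; false; false; false; false; false; true; false; true; false; true; false; false; true; false; true];
  [:: false; true; false; false; false; true; false; false; false; false; true; false; true; false; false; false; false; false; false; false; false; false; false; true; false; true; false; false; true];
  [:: true; false; false; true; false; false; false; true; false; false; false; false; false; false; false; false; false; true; false; true; false; false; false; true; false; false; false; false; false; true];
  [:: false; false; false; true; false; false; false; false; true; false; false; false; false; false; false; true; false; true; false; true; false; false; false; false; false; false; false; false; true; false; false];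
  [:: false; false; false; false; false; true; false; true; false; false; true; false; false; false; true; false; false; false; false; false; false; false; false; false; true; false; false; true; false; false; false; true];
  [:: false; false; true; false; false; false; true; false; true; false; false; false; false; false; false; false; false; false; false; true; false; false; false; false; false; false; false; false; true; false; true; false; true];
  [:: true; false; false; false; false; true; false; false; false; false; false; false; false; true; true; false; false; false; false; false; false; false; false; false; false; false; false; true; false; false; false; true; false; true];
  [:: false; true; false; false; true; false; false; true; false; false; false; false; false; false; false; false; false; false; true; false; false; false; true; false; false; true; false; false; false; false; false; true; false; false; true];
  [:: true; false; false; false; false; false; false; false; false; true; false; false; true; false; true; false; false; false; false; false; false; true; false; false; false; false; false; false; false; false; false; false; false; true; false; true];
  [:: false; false; false; false; false; false; false; true; false; false; false; true; false; false; false; false; false; false; false; false; false; false; true; false; false; false; false; true; false; true; false; true; false; true; false; false; true];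
  [:: false; true; false; false; true; false; false; true; false; false; false; false; false; false; false; false; false; false; true; false; false; false; false; true; false; true; false; false; false; false; false; true; false; false; false; false; false; false];
  [:: false; false; false; true; false; false; false; false; true; false; false; false; true; false; false; false; true; false; false; false; false; false; false; false; false; false; false; false; false; false; false; false; true; false; false; true; false; true; true];
  [:: false; false; false; false; true; false; true; false; false; false; false; false; false; false; false; false; false; false; true; true; false; false; false; false; false; false; false; false; false; false; false; false; true; false; true; false; true; false; false; true];
  [:: false; true; false; false; false; false; false; false; false; false; true; false; true; false; false; true; true; false; false; false; false; false; false; false; false; false; false; false; false; false; false; false; false; false; true; false; false; false; true; false; true];
  [:: false; false; false; false; false; false; true; false; false; false; false; false; false; false; false; false; false; false; true; false; false; false; true; false; false; true; false; false; false; false; false; true; true; false; false; false; false; false; false; false; false; true]].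


Lemma Fsearch : ext F_tab 2 7 0 [::] = false.
Proof. vm_compute. reflexivity. Qed.
Lemma Nsearch : ext N_tab 4 40 3 [:: 0;1;2] = false.
Proof. vm_compute. reflexivity. Qed.

Definition S n (l : seq nat) : {set 'I_n} := [set x | (nat_of_ord x).+1 \in l].

Definition disjb (l m : seq nat) := all (fun a => a \notin m) l.

Lemma disj_S n l m : disjb l m -> [disjoint S n l & S n m].
Proof.
move=> /allP h; rewrite disjoints_subset; apply/subsetP => x; rewrite !inE => xl.
by apply/negP => xm; have := h _ xl; rewrite xm.
Qed.

Definition seteqb n (l m : seq nat) := all (fun i => (i \in l) == (i \in m)) (iota 1 n).

Lemma seteqS n l m : (S n l == S n m) = seteqb n l m.
Proof.
apply/eqP/allP => [e i | h].
  rewrite mem_iota => /andP [i1 i2].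
  have hi : i.-1 < n by lia.
  have := congr1 (fun A : {set 'I_n} => Ordinal hi \in A) e; rewrite !inE /=.
  have -> : i.-1.+1 = i by lia.
  by move=> ->.
apply/setP => x; rewrite !inE; apply/eqP; apply: h.
by rewrite mem_iota; have := ltn_ord x; move=> ?; apply/andP; split; lia.
Qed.

Lemma card_S n l : all (fun i => 0 < i <= n) l -> #|S n l| = size (undup l).
Proof.
elim: l => [|a l IH] /=.
  by move=> _; apply/eqP; rewrite cards_eq0; apply/eqP/setP => x; rewrite !inE.
move=> /andP [ha hl].
have han : a.-1 < n by lia.
have -> : S n (a :: l) = Ordinal han |: S n l.
  apply/setP => x; rewrite !inE -val_eqE /=.
  have -> : (val x == a.-1) = ((val x).+1 == a) by apply/eqP/eqP; lia.
  by [].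
rewrite cardsU1 IH // inE /=.
have -> : a.-1.+1 = a by lia.
by case: (a \in l).
Qed.

Lemma pt_S m a b c : 0 < a <= m.+1 -> 0 < b <= m.+1 -> 0 < c <= m.+1 ->
  [set (inord a.-1 : 'I_m.+1); inord b.-1; inord c.-1] = S m.+1 [:: a; b; c].
Proof.
move=> ha hb hc; apply/setP => x; rewrite !inE -!val_eqE /= !inordK; try lia.
Qed.

Definition FL := [:: [:: 1;2;3]; [:: 1;4;5]; [:: 1;6;7]; [:: 2;4;6]; [:: 2;5;7]; [:: 3;4;7]; [:: 3;5;6]].
Definition NL := [:: [:: 1;2;9]; [:: 4;6;7]; [:: 1;7;8]; [:: 1;4;5]; [:: 2;5;6]; [:: 6;8;9]; [:: 3;4;9]; [:: 2;3;7]].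

Definition basb n L (l : seq nat) :=
  all (fun i => 0 < i <= n) l && (size (undup l) == 3) && ~~ has (seteqb n l) L.

Lemma fano_mem l : basb 7 FL l -> S 7 l \in fano_bases.
Proof.
move=> /andP [/andP [r s3] hL].
rewrite /fano_bases inE card_S // s3 /= /fano_lines /pt7 !pt_S //.
rewrite !inE !seteqS -!orbA.
by move: hL; rewrite /= orbF.
Qed.

Lemma np_mem l : basb 9 NL l -> S 9 l \in nonpappus_bases.
Proof.
move=> /andP [/andP [r s3] hL].
rewrite /nonpappus_bases inE card_S // s3 /= /nonpappus_lines /pt9 !pt_S //.
rewrite !inE !seteqS -!orbA.
by move: hL; rewrite /= orbF.
Qed.

Definition adj_ok (vs : seq (seq nat)) tab :=
  all (fun u => all (fun w => tadj tab u w ==> disjb (nth [::] vs u) (nth [::] vs w))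
     (iota 0 u)) (iota 0 (size vs)).

Lemma Fadj : adj_ok F_vs F_tab. Proof. vm_compute. reflexivity. Qed.
Lemma Nadj : adj_ok N_vs N_tab. Proof. vm_compute. reflexivity. Qed.
Lemma Fbas : all (basb 7 FL) F_vs. Proof. vm_compute. reflexivity. Qed.
Lemma Nbas : all (basb 9 NL) N_vs. Proof. vm_compute. reflexivity. Qed.

Section Lower.
Variables (n : nat) (bases : {set {set 'I_n}}) (vs : seq (seq nat)) (tab : seq (seq bool)).
Hypothesis hadj : adj_ok vs tab.
Hypothesis hbas : forall u, u < size vs -> S n (nth [::] vs u) \in bases.
Variables (j : nat) (c : {set 'I_n} -> 'I_j).
Hypothesis hc : KG_proper_coloring bases c.
Let f u := nat_of_ord (c (S n (nth [::] vs u))).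

Lemma fP u w : u < size vs -> w < u -> tadj tab u w -> f u != f w.
Proof.
move=> us wu a.
have ws : w < size vs by lia.
move/allP: hadj => /(_ u); rewrite mem_iota add0n => /(_ us) /allP /(_ w).
rewrite mem_iota add0n => /(_ wu); rewrite a /= => /(disj_S n) dj.
by have := hc (hbas us) (hbas ws) dj.
Qed.

Lemma lowerF K : j <= K -> ext tab K (size vs) 0 [::] = false -> False.
Proof.
move=> jK hs.
have : ext tab K (size vs) 0 (map f (iota 0 0)).
  apply: ext_complete => [u|u w]; first by rewrite /f; have := ltn_ord (c (S n (nth [::] vs u))); lia.
  by rewrite add0n; apply: fP.
by rewrite /= hs.
Qed.

Definition hn (a b d x : nat) := if x == a then 0 else if x == b then 1 else if x == d then 2 else 3.

Lemma hn_inj a b d x y : a < 4 -> b < 4 -> d < 4 -> a != b -> a != d -> b != d ->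
  x < 4 -> y < 4 -> x != y -> hn a b d x != hn a b d y.
Proof.
rewrite /hn => *; repeat case: eqP; lia.
Qed.

Lemma lowerN : j <= 4 -> 3 <= size vs -> tadj tab 1 0 -> tadj tab 2 0 -> tadj tab 2 1 ->
  ext tab 4 (size vs - 3) 3 [:: 0; 1; 2] = false -> False.
Proof.
move=> j4 s3 a10 a20 a21 hs.
have fK u : f u < 4 by rewrite /f; have := ltn_ord (c (S n (nth [::] vs u))); lia.
have f10 := fP (ltac:(lia) : 1 < size vs) (ltac:(lia) : 0 < 1) a10.
have f20 := fP (ltac:(lia) : 2 < size vs) (ltac:(lia) : 0 < 2) a20.
have f21 := fP (ltac:(lia) : 2 < size vs) (ltac:(lia) : 1 < 2) a21.
pose g u := hn (f 0) (f 1) (f 2) (f u).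
have : ext tab 4 (size vs - 3) 3 (map g (iota 0 3)).
  apply: ext_complete => [u|u w uv wu a].
    by rewrite /g /hn; repeat case: eqP.
  rewrite /g; apply: hn_inj; rewrite ?fK // 1?eq_sym //.
  by rewrite eq_sym; apply: fP => //; lia.
have -> : map g (iota 0 3) = [:: 0; 1; 2].
  rewrite /= /g /hn eqxx.
  have -> : (f 1 == f 0) = false by apply/negbTE.
  have -> : (f 2 == f 0) = false by apply/negbTE.
  have -> : (f 2 == f 1) = false by apply/negbTE.
  by rewrite !eqxx.
by rewrite hs.
Qed.
End Lower.

Section Upper.
Variables (n k : nat).
Definition mcol (A : {set 'I_n}) : 'I_k.+1 :=
  inord (find (fun i => [exists x in A, val x == i]) (iota 0 k)).

Lemma mcol_proper (bases : {set {set 'I_n}}) :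
  (forall A, A \in bases -> #|A| = 3) -> n - k < 6 ->
  KG_proper_coloring bases mcol.
Proof.
move=> h3 hk A B Ab Bb dj; apply/negP => /eqP /(congr1 (@nat_of_ord _)).
rewrite /mcol !inordK ?ltnS; last 2 first.
- by have := find_size (fun i => [exists x in B, val x == i]) (iota 0 k); rewrite size_iota.
- by have := find_size (fun i => [exists x in A, val x == i]) (iota 0 k); rewrite size_iota.
set PA := fun i => _; set PB := fun i => _ => e.
case hA: (has PA (iota 0 k)).
  have hB : has PB (iota 0 k) by rewrite has_find -e -has_find.
  have := nth_find 0 hA; have := nth_find 0 hB; rewrite -e.
  have := hA; rewrite has_find size_iota => lt; rewrite nth_iota // add0n.
  move=> /existsP [y /andP [yB /eqP yv]] /existsP [x /andP [xA /eqP xv]].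
  have xy : x = y by apply: val_inj; rewrite xv yv.
  by have := disjointFr dj xA; rewrite xy yB.
have hB : ~~ has PB (iota 0 k) by rewrite has_find -e -has_find hA.
have sub (C : {set 'I_n}) : ~~ has (fun i => [exists x in C, val x == i]) (iota 0 k) ->
    C \subset S n (iota k.+1 (n - k)).
  move=> /hasPn hC; apply/subsetP => x xC; rewrite inE mem_iota.
  have xn := ltn_ord x.
  case: (leqP k x) => xk; first by apply/andP; split; lia.
  have := hC (val x); rewrite mem_iota add0n xk => /(_ isT) /existsP; case.
  by exists x; rewrite xC eqxx.
have sU : A :|: B \subset S n (iota k.+1 (n - k)) by rewrite subUset !sub // hA.
have := subset_leq_card sU; rewrite cardsU card_S; last first.
  by apply/allP => i; rewrite mem_iota; lia.
rewrite undup_id ?iota_uniq // size_iota.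
move: dj; rewrite -setI_eq0 => /eqP ->; rewrite cards0 (h3 _ Ab) (h3 _ Bb); lia.
Qed.
End Upper.

Theorem proposition4p7 :
  KG_chromatic_number_is fano_bases 3 /\ KG_chromatic_number_is nonpappus_bases 5.
Proof.
split; split.
- exists (@mcol 7 2); apply: mcol_proper => //.
  by move=> A; rewrite inE => /andP [/eqP].
- move=> j [c hc]; rewrite leqNgt; apply/negP => jl.
  have hb : forall u, u < size F_vs -> S 7 (nth [::] F_vs u) \in fano_bases.
    by move=> u us; apply: fano_mem; apply: (allP Fbas); apply: mem_nth.
  have j2 : j <= 2 by lia.
  exact: (lowerF Fadj hb hc j2 Fsearch).
- exists (@mcol 9 4); apply: mcol_proper => //.
  by move=> A; rewrite inE => /andP [/eqP].
- move=> j [c hc]; rewrite leqNgt; apply/negP => jl.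
  have hb : forall u, u < size N_vs -> S 9 (nth [::] N_vs u) \in nonpappus_bases.
    by move=> u us; apply: np_mem; apply: (allP Nbas); apply: mem_nth.
  have j4 : j <= 4 by lia.
  exact: (lowerN Nadj hb hc j4 isT isT isT isT Nsearch).
Qed.
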